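(* Let $G_0$ be a fixed $n\times l$ binary matrix, $G_1$ a fixed $n\times k$ binary matrix and $\mathbf m\in\{0,1\}^k$ fixed. Then $$P(E=0)\le\sum_{u=d_0}^{n}\beta^{u}(1-\beta)^{n-u}\sum_{w=d_0}^{u}B_{0,w}\binom{n-w}{u-w}.$$
   Context: All arithmetic is over $\mathrm{GF}(2)$. $\mathcal C_0^{\perp}=\{\mathbf x\in\{0,1\}^n: G_0^T\mathbf x=\mathbf 0\}$; $B_{0,w}$ is the number of vectors of Hamming weight $w$ in $\mathcal C_0^\perp$, and $d_0$ is the minimum Hamming weight of a nonzero vector of $\mathcal C_0^\perp$. Defect model: each of the $n$ memory cells is independently defective with probability $\beta\in(0,1)$; a defective cell is stuck at $0$ or at $1$, each with probability $1/2$, independently. Let $\mathcal U$ be the set of defect positions, $U=|\mathcal U|$, $\mathbf s^{\mathcal U}$ the vector of stuck-at values. For a matrix $M$ (resp. vector $\mathbf v$) with rows indexed by $\{1,\dots,n\}$, $M^{\mathcal U}$ (resp. $\mathbf v^{\mathcal U}$) denotes the rows indexed by $\mathcal U$. Encoding: with $\mathbf b^{\mathcal U}=(G_1\mathbf m)^{\mathcal U}+\mathbf s^{\mathcal U}$, look for $\mathbf d\in\{0,1\}^l$ with $G_0^{\mathcal U}\mathbf d=\mathbf b^{\mathcal U}$; $E=1$ if such $\mathbf d$ exists and $E=0$ (encoding failure) otherwise. *)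

(* Defs.v *)
From HB Require Import structures.
From mathcomp Require Import all_boot all_order all_algebra.
Set Implicit Arguments. Unset Strict Implicit. Unset Printing Implicit Defensive.
Import Order.TTheory GRing.Theory Num.Theory.
Local Open Scope ring_scope.

Definition hwt (n : nat) (x : 'cV['F_2]_n) : nat := #|[set i : 'I_n | x i 0 != 0]|.

Definition in_dual (n l : nat) (G0 : 'M['F_2]_(n, l)) (x : 'cV['F_2]_n) : bool :=
  G0^T *m x == 0.

Definition Bw (n l : nat) (G0 : 'M['F_2]_(n, l)) (w : nat) : nat :=
  #|[set x : 'cV['F_2]_n | in_dual G0 x && (hwt x == w)]|.

(* d_0 : minimum weight of a nonzero vector of C0^perp
   (convention: n+1 if C0^perp = {0}, i.e. the minimum over an empty set) *)
Definition d0 (n l : nat) (G0 : 'M['F_2]_(n, l)) : nat :=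
  \big[minn/n.+1]_(x : 'cV['F_2]_n | in_dual G0 x && (x != 0)) hwt x.

(* E = 1 : there is d with G0^U d = b^U, b^U = (G1 m)^U + s^U *)
Definition encodable (n l k : nat) (G0 : 'M['F_2]_(n, l)) (G1 : 'M['F_2]_(n, k))
  (m : 'cV['F_2]_k) (U : {set 'I_n}) (s : 'cV['F_2]_n) : bool :=
  [exists d : 'cV['F_2]_l, [forall i in U, (G0 *m d) i 0 == (G1 *m m) i 0 + s i 0]].

(* P(E = 0): the defect set U has probability beta^|U| (1-beta)^(n-|U|); the stuck-at
   values s^U are uniform on {0,1}^U (probability (1/2)^|U|); s^U is represented by a
   vector s in 'cV_n supported on U. *)
Definition P_fail (R : realFieldType) (n l k : nat) (beta : R)
  (G0 : 'M['F_2]_(n, l)) (G1 : 'M['F_2]_(n, k)) (m : 'cV['F_2]_k) : R :=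
  \sum_(U : {set 'I_n})
    \sum_(s : 'cV['F_2]_n | [forall i, (i \notin U) ==> (s i 0 == 0)])
      beta ^+ #|U| * (1 - beta) ^+ (n - #|U|) * (2%:R)^-1 ^+ #|U|
        * (~~ encodable G0 G1 m U s)%:R.

(* Main.v *)
Require Import Defs.
From HB Require Import structures.
From mathcomp Require Import all_boot all_order all_algebra.
Import Order.TTheory GRing.Theory Num.Theory.
Local Open Scope ring_scope.

Definition supp {n : nat} (x : 'cV['F_2]_n) : {set 'I_n} := [set i | x i 0 != 0].

Lemma key (n l : nat) (G0 : 'M['F_2]_(n, l)) (U : {set 'I_n}) (c : 'cV['F_2]_n) :
  (forall x, in_dual G0 x -> x != 0 -> ~~ (supp x \subset U)) ->
  exists d : 'cV['F_2]_l, forall i, i \in U -> (G0 *m d) i 0 = c i 0.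
Proof.
move=> H.
set D : 'M['F_2]_n := diag_mx (\row_i ((i \in U)%:R : 'F_2)).
have DE : forall p (M : 'M['F_2]_(n, p)) i j, (D *m M) i j = (i \in U)%:R * M i j.
  by move=> p M i j; rewrite /D mul_diag_mx !mxE.
set A := (D *m G0)^T. set v := (D *m c)^T.
have [/submxP [w Hw]|Hn] := boolP (v <= A)%MS.
  exists w^T => i iU.
  have := congr1 trmx Hw.
  rewrite /v /A !trmx_mul !trmxK -mulmxA => /(congr1 (fun M : 'cV['F_2]_n => M i 0)).
  by rewrite !DE iU !mul1r => ->.
exfalso; move: Hn; rewrite submxE.
set K := cokermx A => Hn.
have [j Hj] : exists j, (v *m K) 0 j != 0.
  case: (pickP (fun j => (v *m K) 0 j != 0)) => [j Hj|Hz]; first by exists j.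
  exfalso; apply: (negP Hn); apply/eqP/matrixP => a b; rewrite ord1 [RHS]mxE.
  by apply/eqP/negbFE; exact: (Hz b).
set y := K *m delta_mx j (0 : 'I_1).
set x := D *m y.
have Hd : in_dual G0 x.
  rewrite /in_dual /x mulmxA.
  have -> : G0^T *m D = A by rewrite /A trmx_mul /D tr_diag_mx.
  by rewrite /y mulmxA mulmx_coker mul0mx.
have Hx : x != 0.
  apply: contraNneq Hj => Hx0.
  have : (v *m y) 0 0 = 0.
    by rewrite /v trmx_mul -mulmxA /D tr_diag_mx -/D -/x Hx0 mulmx0 mxE.
  by rewrite /y mulmxA -colE mxE => ->.
have := H x Hd Hx; apply/negP/negPn/subsetP => i; rewrite inE /x DE.
by case: (i \in U) => //; rewrite mul0r eqxx.
Qed.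

Local Open Scope nat_scope.
Lemma supersets (n : nat) (S : {set 'I_n}) (u : nat) :
  #|[set U : {set 'I_n} | (S \subset U) && (#|U| == u)]| =
  ('C(n - #|S|, u - #|S|) * (#|S| <= u))%N.
Proof.
case: (leqP #|S| u) => Hu; last first.
  rewrite muln0; apply/eqP; rewrite cards_eq0; apply/eqP/setP => U; rewrite !inE.
  apply/negbTE/negP => /andP [/subset_leq_card HS /eqP HU]; move: Hu; rewrite ltnNge.
  by rewrite -HU HS.
rewrite muln1.
have -> : n - #|S| = #|~: S|.
  by rewrite -{1}(card_ord n) -(cardsC S) addKn.
rewrite -cards_draws.
rewrite -(@card_in_imset _ _ (fun U => U :\: S)); last first.
  move=> U1 U2; rewrite !inE => /andP [H1 _] /andP [H2 _] e.
  apply/setP => i; have := congr1 (fun A : {set 'I_n} => i \in A) e; rewrite !inE.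
  case Si: (i \in S) => /=; last by [].
  by rewrite (subsetP H1 _ Si) (subsetP H2 _ Si).
apply: eq_card => A; rewrite [in RHS]inE; apply/imsetP/idP.
  case=> U; rewrite inE => /andP [HSU /eqP HU] ->.
  rewrite subsetDr cardsD /=.
  by rewrite (setIidPr HSU) HU.
case/andP => HA /eqP HAc.
have dis : A :&: S = set0.
  apply/setP => i; rewrite !inE; case iA: (i \in A) => //=.
  by have := subsetP HA _ iA; rewrite inE => /negbTE.
exists (A :|: S).
  rewrite inE subsetUr /= cardsU dis cards0 subn0 HAc subnK //.
apply/setP => i; rewrite !inE; case iA: (i \in A) => //=.
  by have := subsetP HA _ iA; rewrite inE => ->.
by rewrite andNb.
Qed.

Lemma partition_nat (T : finType) (P : pred T) (f : T -> nat) (a b : nat) (F : T -> nat) :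
  (forall x, P x -> a <= f x < b) ->
  \sum_(x | P x) F x = \sum_(a <= w < b) \sum_(x | P x && (f x == w)) F x.
Proof.
move=> H; symmetry; rewrite -(exchange_big_dep xpredT) //=.
apply: eq_bigr => x Px.
rewrite big_mkcond (bigD1_seq (f x)) ?mem_index_iota ?H ?iota_uniq //= eqxx.
rewrite big1 ?addn0 // => w; rewrite eq_sym => /negbTE -> //.
Qed.

Lemma hwt_le (n : nat) (x : 'cV['F_2]_n) : hwt x <= n.
Proof. by have := max_card [set i : 'I_n | x i ord0 != 0%R]; rewrite card_ord. Qed.

Lemma d0_le (n l : nat) (G0 : 'M['F_2]_(n, l)) : d0 G0 <= n.+1.
Proof.
rewrite /d0; elim/big_ind: _ => //; first by move=> p q Hp Hq; rewrite geq_min Hp.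
by move=> x _; apply: leqW; apply: hwt_le.
Qed.

Lemma d0_gt0 (n l : nat) (G0 : 'M['F_2]_(n, l)) : 0 < d0 G0.
Proof.
rewrite /d0; elim/big_ind: _ => //.
  by move=> p q Hp Hq; rewrite leq_min Hp Hq.
move=> x /andP [_ Hx]; rewrite lt0n; apply: contra Hx.
rewrite /hwt cards_eq0 => /eqP H0; apply/eqP/matrixP => i j; rewrite ord1 mxE.
apply/eqP; apply: contraT => Hi.
have : i \in [set i : 'I_n | x i ord0 != 0%R] by rewrite inE.
by rewrite H0 inE.
Qed.

Lemma d0_min (n l : nat) (G0 : 'M['F_2]_(n, l)) x :
  in_dual G0 x -> x != 0%R -> d0 G0 <= hwt x.
Proof.
move=> H1 H2; rewrite /d0.
have : x \in index_enum (matrix 'F_2 n 1) by rewrite mem_index_enum.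
elim: (index_enum _) => // y r IH; rewrite inE big_cons.
case/orP => [/eqP <-|/IH Hr]; first by rewrite H1 H2 geq_minl.
by case: ifP => // _; rewrite geq_min Hr orbT.
Qed.


Lemma f2 (a b : 'F_2) : (a != 0%R) = (b != 0%R) -> a = b.
Proof. by case: a => [[|[|?]] ?]; case: b => [[|[|?]] ?] //= _; apply: val_inj. Qed.

Lemma count_s (n : nat) (U : {set 'I_n}) :
  #|[set s : 'cV['F_2]_n | [forall i, (i \notin U) ==> (s i ord0 == 0%R)]]| <= 2 ^ #|U|.
Proof.
rewrite -card_powerset -(@card_in_imset _ _ supp); last first.
  move=> s t _ _ e; apply/matrixP => i j; rewrite ord1; apply: f2.
  by have := congr1 (fun A : {set 'I_n} => i \in A) e; rewrite !inE.
apply: subset_leq_card; apply/subsetP => A /imsetP [s]; rewrite inE => /forallP Hs ->.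
rewrite powersetE; apply/subsetP => i; rewrite inE; apply: contraR => iU.
by have := Hs i; rewrite iU /= => /eqP ->; rewrite eqxx.
Qed.

Lemma nat_ident (n l : nat) (G0 : 'M['F_2]_(n, l)) (u : nat) :
  \sum_(x | in_dual G0 x && (x != 0%R)) ('C(n - hwt x, u - hwt x) * (hwt x <= u))
  = \sum_(d0 G0 <= w < u.+1) Bw G0 w * 'C(n - w, u - w).
Proof.
transitivity (\sum_(x | (in_dual G0 x && (x != 0%R)) && (hwt x <= u)) 'C(n - hwt x, u - hwt x)).
  by rewrite [RHS]big_mkcondr; apply: eq_bigr => x _; case: (hwt x <= u); rewrite ?muln1 ?muln0.
rewrite (@partition_nat _ _ (@hwt n) (d0 G0) u.+1); last first.
  by move=> x /andP [/andP [H1 H2] H3]; rewrite ltnS H3 d0_min.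
apply: eq_big_nat => w /andP [Hw1 Hw2].
transitivity (\sum_(x | ((in_dual G0 x && (x != 0%R)) && (hwt x <= u)) && (hwt x == w))
  'C(n - w, u - w)).
  by apply: eq_bigr => x /andP [_ /eqP ->].
have -> : forall (Q : pred 'cV['F_2]_n) K, \sum_(x | Q x) K = #|[set x | Q x]| * K.
  by move=> Q K; rewrite -sum_nat_const; apply: eq_bigl => x; rewrite inE.
congr (_ * _); rewrite /Bw; apply: eq_card => x; rewrite !inE.
case: (hwt x =P w) => [Hx|]; rewrite ?andbF //.
case Hd: (in_dual G0 x) => //=; rewrite -Hx in Hw2; rewrite ltnS in Hw2; rewrite Hw2 andbT.
rewrite andbT; apply/negP => /eqP Hx0; move: Hw1; rewrite -Hx Hx0 /hwt.
have -> : [set i : 'I_n | (0%R : 'cV['F_2]_n) i ord0 != 0%R] = set0.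
  by apply/setP => i; rewrite !inE mxE eqxx.
by rewrite cards0 leqNgt d0_gt0.
Qed.

Lemma partition_R (R : realFieldType) (T : finType) (P : pred T) (f : T -> nat) (a b : nat)
  (F : T -> R) :
  (forall x, P x -> a <= f x < b) ->
  (\sum_(x | P x) F x = \sum_(a <= w < b) \sum_(x | P x && (f x == w)) F x)%R.
Proof.
move=> H; symmetry; rewrite -(exchange_big_dep xpredT) //=.
apply: eq_bigr => x Px.
rewrite big_mkcond (bigD1_seq (f x)) ?mem_index_iota ?H ?iota_uniq //= eqxx.
rewrite big1 ?addr0 // => w; rewrite eq_sym => /negbTE -> //.
Qed.

Local Open Scope ring_scope.

Lemma step1 (R : realFieldType) (beta : R) (n l k : nat)
  (G0 : 'M['F_2]_(n, l)) (G1 : 'M['F_2]_(n, k)) (m : 'cV['F_2]_k) (U : {set 'I_n}) :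
  0 < beta -> beta < 1 ->
  \sum_(s : 'cV['F_2]_n | [forall i, (i \notin U) ==> (s i 0 == 0)])
      beta ^+ #|U| * (1 - beta) ^+ (n - #|U|) * (2%:R)^-1 ^+ #|U|
        * (~~ encodable G0 G1 m U s)%:R
  <= beta ^+ #|U| * (1 - beta) ^+ (n - #|U|) *
     (#|[set x | in_dual G0 x && (x != 0) && (supp x \subset U)]|)%:R.
Proof.
move=> b0 b1.
set c := beta ^+ #|U| * (1 - beta) ^+ (n - #|U|).
have c0 : 0 <= c by rewrite /c mulr_ge0 // exprn_ge0 // ?subr_ge0 ltW.
set N := #|[set x | in_dual G0 x && (x != 0) & (supp x \subset U)]|.
have [N0|Npos] := eqVneq N 0%N.
  rewrite N0 mulr0n mulr0 big1 // => s _.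
  suff -> : encodable G0 G1 m U s by rewrite mulr0.
  have H : forall x, in_dual G0 x -> x != 0 -> ~~ (supp x \subset U).
    move=> x H1 H2; apply/negP => H3.
    move: N0; rewrite /N => /eqP; rewrite cards_eq0 => /eqP/setP/(_ x).
    by rewrite !inE H1 H2 H3.
  have [d Hd] := @key n l G0 U (G1 *m m + s) H.
  apply/existsP; exists d; apply/forallP => i; apply/implyP => iU.
  by rewrite Hd // mxE.
set K := c * 2%:R^-1 ^+ #|U|.
apply: (@le_trans _ _ (\sum_(s : 'cV['F_2]_n | [forall i, (i \notin U) ==> (s i 0 == 0)]) K)).
  apply: ler_sum => s _; case: (~~ _); rewrite ?mulr1 ?mulr0 //.
  by rewrite /K mulr_ge0 // exprn_ge0 // invr_ge0 ler0n.
have -> : \sum_(s : 'cV['F_2]_n | [forall i, (i \notin U) ==> (s i 0 == 0)]) K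
   = K *+ #|[set s : 'cV['F_2]_n | [forall i, (i \notin U) ==> (s i ord0 == 0%R)]]|.
  by rewrite -sumr_const; apply: eq_bigl => s; rewrite inE.
rewrite -mulr_natr.
apply: (@le_trans _ _ (K * (2 ^ #|U|)%:R)).
  rewrite ler_wpM2l ?ler_nat ?count_s //.
  by rewrite /K mulr_ge0 // exprn_ge0 // invr_ge0 ler0n.
rewrite /K natrX -mulrA -exprMn mulVf ?pnatr_eq0 // expr1n mulr1.
by rewrite ler_peMr // ler1n lt0n.
Qed.

Theorem corollary1 (R : realFieldType) (beta : R) (n l k : nat)
  (G0 : 'M['F_2]_(n, l)) (G1 : 'M['F_2]_(n, k)) (m : 'cV['F_2]_k) :
  0 < beta -> beta < 1 ->
  P_fail beta G0 G1 m <=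
  \sum_(d0 G0 <= u < n.+1)
     beta ^+ u * (1 - beta) ^+ (n - u) *
     \sum_(d0 G0 <= w < u.+1) (Bw G0 w)%:R * ('C(n - w, u - w))%:R.
Proof.
move=> b0 b1.
pose c (u : nat) := beta ^+ u * (1 - beta) ^+ (n - u).
pose N (U : {set 'I_n}) := #|[set x | in_dual G0 x && (x != 0) & (supp x \subset U)]|.
apply: (@le_trans _ _ (\sum_(U : {set 'I_n}) c #|U| * (N U)%:R)).
  by rewrite /P_fail; apply: ler_sum => U _; apply: step1.
have E1 : \sum_(U : {set 'I_n}) c #|U| * (N U)%:R =
   \sum_(x | in_dual G0 x && (x != 0))
     \sum_(0 <= u < n.+1) c u * ('C(n - hwt x, u - hwt x) * (hwt x <= u))%:R.
  transitivity (\sum_(U : {set 'I_n})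
      \sum_(x | (in_dual G0 x && (x != 0)) && (supp x \subset U)) c #|U|).
    apply: eq_bigr => U _; rewrite /N mulr_natr -sumr_const.
    by apply: eq_bigl => x; rewrite inE.
  rewrite (exchange_big_dep (fun x => in_dual G0 x && (x != 0))) /=; last first.
    by move=> U x _ /andP [].
  apply: eq_bigr => x Hx.
  transitivity (\sum_(U : {set 'I_n} | supp x \subset U) c #|U|).
    by apply: eq_bigl => U; rewrite Hx.
  rewrite (@partition_R _ _ _ (fun U : {set 'I_n} => #|U|) 0 n.+1); last first.
    by move=> U _; rewrite /= ltnS; have := max_card U; rewrite card_ord.
  apply: eq_bigr => u _.
  transitivity (\sum_(U : {set 'I_n} | (supp x \subset U) && (#|U| == u)) c u).
    by apply: eq_bigr => U /andP [_ /eqP ->].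
  rewrite /hwt -(@supersets n (supp x)) mulr_natr -sumr_const.
  by apply: eq_bigl => U; rewrite inE.
rewrite E1 exchange_big /=.
have E2 : forall u, \sum_(x | in_dual G0 x && (x != 0))
    c u * ('C(n - hwt x, u - hwt x) * (hwt x <= u))%:R =
    c u * \sum_(d0 G0 <= w < u.+1) (Bw G0 w)%:R * ('C(n - w, u - w))%:R.
  move=> u; rewrite -mulr_sumr -natr_sum nat_ident natr_sum.
  by congr (_ * _); apply: eq_bigr => w _; rewrite natrM.
rewrite (eq_bigr _ (fun u _ => E2 u)).
rewrite (@big_cat_nat _ _ _ (d0 G0) 0 n.+1) ?d0_le //=.
rewrite [X in X + _]big_nat big1 ?add0r // => u /andP [_ Hu].
by rewrite big_geq ?mulr0.
Qed.
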